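(* Let $k,n\in\mathbb N$ with $k\le n$, let $\lambda\vdash n$ be a partition, let $\pi\in\mathfrak S_n$ be a permutation with $\pi(l)=l$ for all $1\le l<k$, and let $T\in\operatorname{T}(\lambda)$ be a tabloid. Set $\tilde T:=\pi\circ T$, and for each cell $x\in\lambda$ let $T_x$ and $\tilde T_x$ be the intermediate tabloids arising in the Novelli--Pak--Stoyanovskii sorting of $T$ and of $\tilde T$, respectively. Then for every $x\in\lambda$ the permutation $\pi_x\in\mathfrak S_n$ defined by $\tilde T_x=\pi_x\circ T_x$ satisfies $\pi_x(l)=l$ for all $1\le l<k$.
   Context: A partition $\lambda\vdash n$ is identified with its Young diagram $\{(i,j)\in\mathbb Z^2: i\ge1,\ 1\le j\le\lambda_i\}$ (cells in matrix coordinates, row $i$, column $j$). A tabloid of shape $\lambda$ is a bijection $T:\lambda\to\{1,\dots,n\}$; $\operatorname{T}(\lambda)$ is the set of tabloids. $\mathfrak S_n$ acts by $\sigma(T):=\sigma\circ T$. The right and bottom neighbours of $(i,j)$ are the cells $(i,j+1),(i+1,j)$ lying in $\lambda$. Order the cells by $(i,j)\prec(k,l)$ iff $j<l$, or $j=l$ and $i<k$; list them as $z_1\prec\dots\prec z_n$. Novelli--Pak--Stoyanovskii sorting of $T$: set $T_{z_n}:=T$; for $m=n-1,n-2,\dots,1$, obtain $T_{z_m}$ from $T_{z_{m+1}}$ by the following slide $\sigma_{z_m}$ at $z_m$: the entry $a$ sitting in $z_m$ is repeatedly exchanged with the smaller of the entries in its current right and bottom neighbours, as long as that smaller entry is less than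 $a$ (if $a$ is smaller than all of them, or there are none, it stops). Thus $T_{z_m}=\sigma_{z_m}\circ T_{z_{m+1}}$ where $\sigma_{z_m}$ is a cyclic permutation of entries. The output $T_{z_1}$ is a standard Young tableau. *)

(* Defs.v *)
From mathcomp Require Import all_boot.
Set Implicit Arguments. Unset Strict Implicit. Unset Printing Implicit Defensive.

Definition is_partition (n : nat) (lam : seq nat) : bool :=
  [&& sorted geq lam, all (fun x => 0 < x) lam & sumn lam == n].

(* Cells of the Young diagram, matrix coordinates, 1-based:
   (i,j) with i >= 1, 1 <= j <= lam_i  (lam_i = nth 0 lam i.-1). *)
Definition in_shape (lam : seq nat) (c : nat * nat) : bool :=
  [&& 1 <= c.1, 1 <= c.2 & c.2 <= nth 0 lam c.1.-1].

(* S_n as the bijections of {1,...,n} (values outside are irrelevant). *)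
Definition is_perm (n : nat) (p : nat -> nat) : Prop :=
  (forall l, 1 <= l <= n -> 1 <= p l <= n) /\
  (forall l l', 1 <= l <= n -> 1 <= l' <= n -> p l = p l' -> l = l').

(* Tabloids: bijections from the cells of lam onto {1,...,n}
   (represented as total functions on nat*nat; off-shape values irrelevant). *)
Definition is_tabloid (lam : seq nat) (n : nat) (T : nat * nat -> nat) : Prop :=
  (forall c, in_shape lam c -> 1 <= T c <= n) /\
  (forall c c', in_shape lam c -> in_shape lam c' -> T c = T c' -> c = c') /\
  (forall l, 1 <= l <= n -> exists2 c, in_shape lam c & T c = l).

(* The cells listed in the order z_1 < ... < z_n: (i,j) < (k,l) iff j < l,
   or j = l and i < k  (column by column, top to bottom). *)
Definition cells_list (lam : seq nat) : seq (nat * nat) :=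
  flatten [seq [seq (i, j) | i <- iota 1 (size lam) & j <= nth 0 lam i.-1]
          | j <- iota 1 (head 0 lam)].

Definition swap_entries (T : nat * nat -> nat) (p m : nat * nat) : nat * nat -> nat :=
  fun c => if c == p then T m else if c == m then T p else T c.

Fixpoint slide_aux (lam : seq nat) (fuel : nat) (p : nat * nat)
    (T : nat * nat -> nat) : nat * nat -> nat :=
  match fuel with
  | 0 => T
  | f.+1 =>
    let r := (p.1, p.2.+1) in
    let b := (p.1.+1, p.2) in
    let cand :=
      match in_shape lam r, in_shape lam b with
      | true, true => Some (if T r < T b then r else b)
      | true, false => Some r
      | false, true => Some b
      | false, false => None
      end in
    match cand with
    | Some m => if T m < T p then slide_aux lam f m (swap_entries T p m) else T
    | None => T
    end
  end.

(* The slide sigma_z at z; the fuel size lam + lam_1 bounds the number of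
   moves (each move strictly increases i + j). *)
Definition slide (lam : seq nat) (z : nat * nat) (T : nat * nat -> nat) :=
  slide_aux lam (size lam + head 0 lam) z T.

(* NPS intermediate tabloid T_x: with x = z_m, T_{z_n} = T and
   T_{z_m} = sigma_{z_m} (T_{z_{m+1}}), i.e. the slides at z_{n-1}, ..., z_m
   applied in that order. *)
Definition nps_inter (lam : seq nat) (T : nat * nat -> nat) (x : nat * nat) :=
  let zs := cells_list lam in
  let i := index x zs in
  foldr (slide lam) T (take ((size zs).-1 - i) (drop i zs)).

(* Main.v *)
Require Import Defs.
From mathcomp Require Import all_boot zify.
Set Implicit Arguments. Unset Strict Implicit. Unset Printing Implicit Defensive.

Definition lexlt (c d : nat * nat) : bool :=
  (c.2 < d.2) || ((c.2 == d.2) && (c.1 < d.1)).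

Lemma lexlt_trans : transitive lexlt.
Proof.
move=> [a1 a2] [b1 b2] [c1 c2]; rewrite /lexlt /=.
case/orP=> [h|/andP[/eqP e h]]; case/orP=> [h'|/andP[/eqP e' h']]; apply/orP; subst.
- left; lia.
- left; lia.
- left; lia.
- right; apply/andP; split=> //; lia.
Qed.

Lemma lexlt_irr : irreflexive lexlt.
Proof. move=> [a b]; rewrite /lexlt /=; lia. Qed.

Definition nbr (p d : nat * nat) : bool :=
  (d == (p.1, p.2.+1)) || (d == (p.1.+1, p.2)).

Lemma nbr_lexlt p d : nbr p d -> lexlt p d.
Proof. by case/orP=> /eqP->; rewrite /lexlt /= ?ltnSn ?eqxx ?ltnSn ?orbT. Qed.

Lemma nbr_sum p d : nbr p d -> d.1 + d.2 = (p.1 + p.2).+1.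
Proof. by case/orP=> /eqP-> /=; lia. Qed.

Section Cells.
Variable lam : seq nat.
Hypothesis lam_sorted : sorted geq lam.

Lemma nth_le_head i : nth 0 lam i <= head 0 lam.
Proof.
move: lam_sorted; case: lam => [|a l] //=; first by rewrite nth_nil.
have gt : transitive geq by move=> x y z /= h1 h2; lia.
move=> /(order_path_min gt) /allP H.
case: i => [|i] //=.
have [hi|hi] := ltnP i (size l).
  by apply: H; apply: mem_nth.
by rewrite nth_default.
Qed.

Lemma in_shape_bound c : in_shape lam c -> c.1 <= size lam /\ c.2 <= head 0 lam.
Proof.
case/and3P=> h1 h2 h3; split; last by apply: leq_trans h3 (nth_le_head _).
case: (ltnP c.1.-1 (size lam)) => h; first lia.
by move: h3; rewrite nth_default //; lia.
Qed.

Local Notation zs := (cells_list lam).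

Lemma zs_shape c : c \in zs -> in_shape lam c.
Proof.
case/flatten_mapP=> j; rewrite mem_iota => /andP[hj1 _].
case/mapP=> i; rewrite mem_filter mem_iota => /andP[hji /andP[hi _]] ->.
by rewrite /in_shape /= hi hj1 hji.
Qed.

Lemma shape_zs c : in_shape lam c -> c \in zs.
Proof.
move=> hc; have [b1 b2] := in_shape_bound hc.
case/and3P: hc => h1 h2 h3.
apply/flatten_mapP; exists c.2; first by rewrite mem_iota; lia.
case: c h1 h2 h3 b1 b2 => i j /= h1 h2 h3 b1 b2.
apply/mapP; exists i => //; rewrite mem_filter h3 mem_iota /=; lia.
Qed.

Lemma cols_pairwise L a : pairwise lexlt
  (flatten [seq [seq (i, j) | i <- iota 1 (size lam) & j <= nth 0 lam i.-1]
          | j <- iota a L]).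
Proof.
elim: L a => [|L IH] a //=.
rewrite pairwise_cat; apply/and3P; split; last exact: IH.
  apply/allrelP=> c d /mapP[i _ ->] /flatten_mapP[j]; rewrite mem_iota => hj.
  case/mapP=> i' _ -> /=; rewrite /lexlt /=; lia.
rewrite -sorted_pairwise; last exact: lexlt_trans.
rewrite sorted_map; apply: sorted_filter.
  by move=> x y z; apply: lexlt_trans.
apply: (sub_sorted _ (iota_ltn_sorted 1 (size lam))).
by move=> x y /= h; rewrite /lexlt /= eqxx h orbT.
Qed.

Lemma zs_pairwise : pairwise lexlt zs.
Proof. exact: cols_pairwise. Qed.

Lemma zs_uniq : uniq zs.
Proof.
apply: (sorted_uniq lexlt_trans lexlt_irr).
by rewrite sorted_pairwise ?zs_pairwise //; exact: lexlt_trans.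
Qed.

Lemma dropS_behead (T : Type) (s : seq T) j : drop j.+1 s = behead (drop j s).
Proof. by elim: s j => [|x s IH] [|j] //=; rewrite drop0. Qed.

Lemma pw_split (t u : seq (nat * nat)) c d : pairwise lexlt (t ++ u) ->
  c \in u -> d \in t ++ u -> lexlt c d -> d \in u /\ pairwise lexlt u.
Proof.
rewrite pairwise_cat mem_cat => /and3P[/allrelP Hr _ Pu] hc /orP[hdt|hdu] hcd //.
by have := lexlt_trans (Hr _ _ hdt hc) hcd; rewrite lexlt_irr.
Qed.

Lemma zs_closed j c d : c \in drop j zs -> in_shape lam d -> nbr c d ->
  d \in drop j.+1 zs.
Proof.
move=> hc hd hn; have hcd := nbr_lexlt hn.
have hdz := shape_zs hd.
have P := zs_pairwise.
have E := cat_take_drop j zs.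
rewrite -E in P hdz.
have [hdd Pd] := pw_split P hc hdz hcd.
rewrite dropS_behead; move: hc hdd Pd; case: (drop j zs) => [|z r] //=.
rewrite !inE => /orP[/eqP ec|hc] /orP[/eqP ed|hd2] /andP[/allP H _] //.
  by subst; rewrite lexlt_irr in hcd.
by subst; have := lexlt_trans (H _ hc) hcd; rewrite lexlt_irr.
Qed.
End Cells.

Section Slide.
Variable lam : seq nat.
Hypothesis lam_sorted : sorted geq lam.
Variable k : nat.
Local Notation sh := (in_shape lam).
Implicit Types (T : nat * nat -> nat) (p m c d : nat * nat).

Definition cand p T : option (nat * nat) :=
  let r := (p.1, p.2.+1) in
  let b := (p.1.+1, p.2) in
  match in_shape lam r, in_shape lam b with
  | true, true => Some (if T r < T b then r else b)
  | true, false => Some r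
  | false, true => Some b
  | false, false => None
  end.

Lemma slide_step f p T : slide_aux lam f.+1 p T =
  match cand p T with
  | Some m => if T m < T p then slide_aux lam f m (swap_entries T p m) else T
  | None => T end.
Proof. by []. Qed.

Lemma cand_none p T : cand p T = None -> forall d, sh d -> nbr p d -> False.
Proof.
rewrite /cand /nbr; case E1: (sh _); case E2: (sh _) => // _ d hd.
by case/orP=> /eqP e; subst; rewrite ?E1 ?E2 in hd.
Qed.

Lemma cand_some p T m : cand p T = Some m ->
  [/\ sh m, nbr p m & forall d, sh d -> nbr p d -> T m <= T d].
Proof.
rewrite /cand /nbr; case E1: (sh _); case E2: (sh _) => //= -[<-].
- case: ltnP => h; split; rewrite ?eqxx ?orbT //;
    move=> d hd /orP[] /eqP ->; lia.
- split; rewrite ?eqxx ?orbT // => d hd /orP[] /eqP e; subst; rewrite ?E2 in hd => //.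
- split; rewrite ?eqxx ?orbT // => d hd /orP[] /eqP e; subst; rewrite ?E1 in hd => //.
Qed.

Lemma cand_isSome p T T' : isSome (cand p T) = isSome (cand p T').
Proof. by rewrite /cand; case: (sh _); case: (sh _). Qed.

Definition Agr T T' := forall c, sh c ->
  (T c < k -> T' c = T c) /\ (k <= T c -> k <= T' c).

Lemma agr_big T T' c : Agr T T' -> sh c -> (k <= T c) = (k <= T' c).
Proof.
move=> H hc; have [h1 h2] := H c hc.
case: (leqP k (T c)) => h; first by rewrite h2.
by rewrite h1 // leqNgt h.
Qed.

Lemma cand_small p T T' m : Agr T T' -> cand p T = Some m -> T m < k ->
  cand p T' = Some m.
Proof.
move=> H; rewrite /cand; case E1: (sh _); case E2: (sh _) => //= -[<-].
set r := (p.1, p.2.+1) in E1 *; set b := (p.1.+1, p.2) in E2 *.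
case h: (T r < T b) => hk.
- have [e1 _] := H _ E1; have [e2 h2] := H _ E2.
  suff -> : T' r < T' b by [].
  rewrite e1 //; case: (ltnP (T b) k) => hb; first by rewrite e2.
  by have := h2 hb; lia.
- have [e1 h1] := H _ E1; have [e2 _] := H _ E2.
  suff -> : T' r < T' b = false by [].
  move/negbT: h; rewrite -leqNgt => h.
  rewrite e2 //; case: (ltnP (T r) k) => hr; first by rewrite e1 //; lia.
  by have := h1 hr; lia.
Qed.

Lemma nbr_neq p d : nbr p d -> d != p.
Proof. move=> /nbr_sum h; apply/eqP=> e; subst; lia. Qed.

Lemma nbr_asym p m : nbr p m -> nbr m p -> False.
Proof. by move=> /nbr_sum h1 /nbr_sum h2; lia. Qed.

Lemma nbr_ge p m : nbr p m -> p.1 <= m.1 /\ p.2 <= m.2.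
Proof. by case/orP=> /eqP-> /=; lia. Qed.


Lemma nbr_other p d m : nbr p d -> nbr p m -> d != m -> ~ (m.1 <= d.1 /\ m.2 <= d.2).
Proof.
case/orP=> /eqP-> /orP[] /eqP-> //=; rewrite ?eqxx // => _ /=; lia.
Qed.

Lemma slide_out f p T c : ~ (p.1 <= c.1 /\ p.2 <= c.2) -> slide_aux lam f p T c = T c.
Proof.
elim: f p T => [//|f IH] p T hc; rewrite slide_step.
case E: (cand p T) => [m|] //; case: ifP => // _.
have [_ hpm _] := cand_some E; have [g1 g2] := nbr_ge hpm.
rewrite IH; last by move=> [h1 h2]; apply: hc; lia.
rewrite /swap_entries; case: eqP => [e|_]; first by subst; case: hc; lia.
by case: eqP => [e|_] //; subst; case: hc; lia.
Qed.

Lemma fuel0 p d : size lam + head 0 lam < p.1 + p.2 -> sh d -> nbr p d -> False.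
Proof.
move=> h hd /nbr_sum e; have [b1 b2] := in_shape_bound lam_sorted hd; lia.
Qed.

Definition closed (A : pred (nat * nat)) p :=
  forall c d, (A c \/ c = p) -> sh d -> nbr c d -> A d.
Definition QAp (A : pred (nat * nat)) p T := forall c d, A c -> c <> p -> sh c -> sh d ->
  nbr c d -> k <= T c -> k <= T d.
Definition H3 (A : pred (nat * nat)) p T := forall c, A c -> c <> p -> sh c -> nbr c p ->
  k <= T c -> forall d, sh d -> nbr p d -> k <= T d.
Definition QA (A : pred (nat * nat)) T := forall c d, A c -> sh c -> sh d ->
  nbr c d -> k <= T c -> k <= T d.

Lemma pres A p m T : closed A p -> QAp A p T -> H3 A p T -> nbr p m ->
  (forall d, sh d -> nbr p d -> T m <= T d) -> T m < T p -> sh m ->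
  [/\ A m, closed A m, QAp A m (swap_entries T p m) & H3 A m (swap_entries T p m)].
Proof.
move=> hcl hq h3 hpm hmin hlt hm.
have Am : A m by apply: (hcl p m) => //; right.
have hmp : m != p := nbr_neq hpm.
split => //.
- move=> c d [hc|->] hd hn.
    exact: (hcl c d (or_introl hc) hd hn).
  exact: (hcl m d (or_introl Am) hd hn).
- move=> c d hA hcm hc hd hn; rewrite /swap_entries.
  case: (eqVneq c p) => [ecp|hcp].
    subst c => hb.
    case: (eqVneq d p) => [edp|hdp]; first by move: (nbr_neq hn); rewrite edp eqxx.
    case: (eqVneq d m) => [edm|hdm]; first by lia.
    by have := hmin d hd hn; lia.
  case: (eqVneq c m) => [ecm|hcm']; first by subst.
  move=> hb.
  case: (eqVneq d p) => [edp|hdp].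
    by subst d; apply: (h3 c) => //; apply/eqP.
  case: (eqVneq d m) => [edm|hdm].
    by subst d; have := hq c m hA (elimN eqP hcp) hc hm hn hb; lia.
  by apply: (hq c d) => //; apply/eqP.
- move=> c hA hcm hc hn hb d hd hnd.
  have hdm : d != m := nbr_neq hnd.
  have hdp : d != p by apply/eqP=> e; subst d; exact: (nbr_asym hpm hnd).
  rewrite /swap_entries (negbTE hdm) (negbTE hdp).
  have bm : k <= T m.
    move: hb; rewrite /swap_entries.
    case: (eqVneq c p) => [_|hcp] //.
    rewrite (introF eqP hcm) => hb.
    by apply: (hq c m) => //; apply/eqP.
  apply: (hq m d) => //; exact/eqP.
Qed.

Lemma swap_p T p m : swap_entries T p m p = T m.
Proof. by rewrite /swap_entries eqxx. Qed.

Lemma swap_m T p m : m != p -> swap_entries T p m m = T p.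
Proof. by move=> h; rewrite /swap_entries (negbTE h) eqxx. Qed.

Lemma swap_o T p m c : c != p -> c != m -> swap_entries T p m c = T c.
Proof. by move=> h1 h2; rewrite /swap_entries (negbTE h1) (negbTE h2). Qed.

Lemma notge_next p m : nbr p m -> ~ (m.1 <= p.1 /\ m.2 <= p.2).
Proof. by move=> /nbr_sum h [h1 h2]; lia. Qed.

Lemma QA_slide A f p T : sh p -> closed A p -> QAp A p T -> H3 A p T ->
  size lam + head 0 lam < p.1 + p.2 + f ->
  [/\ QA (fun c => A c || (c == p)) (slide_aux lam f p T),
     (forall c, sh c -> c <> p -> k <= T c -> k <= slide_aux lam f p T c) &
     (k <= T p -> (forall d, sh d -> nbr p d -> k <= T d) -> k <= slide_aux lam f p T p)].
Proof.
elim: f p T => [|f IH] p T hp hcl hq h3 hf.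
  split => //= c d /orP[hA|/eqP ecp] hc hd hn hb.
    case: (eqVneq c p) => [ecp|hcp]; last by apply: (hq c d) => //; apply/eqP.
    by subst; case: (fuel0 _ hd hn); rewrite addn0 in hf.
  by subst; case: (fuel0 _ hd hn); rewrite addn0 in hf.
rewrite !slide_step.
case E: (cand p T) => [m|]; last first.
  split => //= c d /orP[hA|/eqP ecp] hc hd hn hb.
    case: (eqVneq c p) => [ecp|hcp]; last by apply: (hq c d) => //; apply/eqP.
    by subst; case: (cand_none E hd hn).
  by subst; case: (cand_none E hd hn).
have [hm hpm hmin] := cand_some E.
case: ifP => hlt; last first.
  split => //= c d /orP[hA|/eqP ecp] hc hd hn hb.
    case: (eqVneq c p) => [ecp|hcp]; last by apply: (hq c d) => //; apply/eqP.
    by subst; have := hmin d hd hn; move/negbT: hlt; lia.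
  by subst; have := hmin d hd hn; move/negbT: hlt; lia.
have [Am hclm hqm h3m] := pres hcl hq h3 hpm hmin hlt hm.
have hmp : m != p := nbr_neq hpm.
have hfm : size lam + head 0 lam < m.1 + m.2 + f by have := nbr_sum hpm; lia.
have [IQ IC1 IC2] := IH m (swap_entries T p m) hm hclm hqm h3m hfm.
set S := slide_aux lam f m (swap_entries T p m) in IQ IC1 IC2 *.
have Sp : S p = T m by rewrite /S slide_out ?swap_p //; exact: notge_next.
have Smb : k <= T m -> k <= S m.
  move=> hb; apply: IC2; first by rewrite swap_m //; lia.
  move=> d hd hn.
  have hdm : d != m := nbr_neq hn.
  have hdp : d != p by apply/eqP=> e; subst d; exact: (nbr_asym hpm hn).
  by rewrite swap_o //; apply: (hq m d) => //; apply/eqP.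
split.
- move=> c d /orP[hA|/eqP ecp] hc hd hn hb.
    case: (eqVneq c p) => [ecp|hcp]; last first.
      by apply: (IQ c d) => //; rewrite hA.
    subst c; rewrite Sp in hb.
    case: (eqVneq d m) => [->|hdm]; first exact: Smb.
    rewrite /S slide_out; last exact: nbr_other hn hpm hdm.
    rewrite swap_o //; last exact: nbr_neq.
    by have := hmin d hd hn; lia.
  subst c; rewrite Sp in hb.
  case: (eqVneq d m) => [->|hdm]; first exact: Smb.
  rewrite /S slide_out; last exact: nbr_other hn hpm hdm.
  rewrite swap_o //; last exact: nbr_neq.
  by have := hmin d hd hn; lia.
- move=> c hc hcp hb.
  case: (eqVneq c m) => [ecm|hcm]; first by subst; apply: Smb.
  apply: IC1 => //; first exact/eqP.
  by rewrite swap_o //; apply/eqP.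
- by move=> hb hn; rewrite Sp; apply: hn.
Qed.

Lemma Lbig A f p T : sh p -> closed A p -> QAp A p T -> H3 A p T ->
  k <= T p -> (forall d, sh d -> nbr p d -> k <= T d) ->
  forall c, T c < k -> slide_aux lam f p T c = T c.
Proof.
elim: f p T => [//|f IH] p T hp hcl hq h3 hbp hbn c hc.
rewrite slide_step; case E: (cand p T) => [m|] //.
case: ifP => hlt //.
have [hm hpm hmin] := cand_some E.
have [Am hclm hqm h3m] := pres hcl hq h3 hpm hmin hlt hm.
have hmp : m != p := nbr_neq hpm.
have hbm : k <= T m := hbn m hm hpm.
have hcp : c != p by apply/eqP=> e; subst; lia.
have hcm : c != m by apply/eqP=> e; subst; lia.
rewrite IH //; first exact: swap_o.
- by rewrite swap_m.
- move=> d hd hn.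
  have hdm : d != m := nbr_neq hn.
  have hdp : d != p by apply/eqP=> e; subst d; exact: (nbr_asym hpm hn).
  by rewrite swap_o //; apply: (hq m d) => //; apply/eqP.
- by rewrite swap_o.
Qed.

Lemma QAp_agr A p T T' : Agr T T' -> QAp A p T -> QAp A p T'.
Proof.
move=> H hq c d hA hcp hc hd hn; rewrite -!(agr_big H) //; exact: hq.
Qed.

Lemma H3_agr A p T T' : sh p -> Agr T T' -> H3 A p T -> H3 A p T'.
Proof.
move=> hp H h3 c hA hcp hc hn; rewrite -(agr_big H) // => hb d hd hnd.
rewrite -(agr_big H) //; exact: (h3 c).
Qed.

Lemma Agr_swap T T' p m : Agr T T' -> sh p -> sh m ->
  Agr (swap_entries T p m) (swap_entries T' p m).
Proof.
move=> H hp hm c hc; rewrite /swap_entries.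
by case: eqP => _; [apply: H|case: eqP => _; apply: H].
Qed.

Lemma bigcase A f p T T' : sh p -> closed A p -> QAp A p T -> H3 A p T ->
  size lam + head 0 lam < p.1 + p.2 + f -> Agr T T' ->
  k <= T p -> (forall d, sh d -> nbr p d -> k <= T d) ->
  Agr (slide_aux lam f p T) (slide_aux lam f p T').
Proof.
move=> hp hcl hq h3 hf H hbp hbn.
have hq' := QAp_agr H hq; have h3' := H3_agr hp H h3.
have hbp' : k <= T' p by rewrite -(agr_big H).
have hbn' : forall d, sh d -> nbr p d -> k <= T' d.
  by move=> d hd hn; rewrite -(agr_big H) //; apply: hbn.
have [_ C1 C2] := QA_slide hp hcl hq h3 hf.
have [_ C1' C2'] := QA_slide hp hcl hq' h3' hf.
move=> c hc.
case: (ltnP (T c) k) => hck.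
  have [e _] := H c hc.
  rewrite (Lbig f hp hcl hq h3 hbp hbn hck) (Lbig f hp hcl hq' h3' hbp' hbn') e //.
have SB : k <= slide_aux lam f p T c.
  by case: (eqVneq c p) => [->|hcp]; [apply: C2|apply: C1 => //; apply/eqP].
have SB' : k <= slide_aux lam f p T' c.
  have hck' : k <= T' c by rewrite -(agr_big H).
  by case: (eqVneq c p) => [->|hcp]; [apply: C2'|apply: C1' => //; apply/eqP].
by split => // h; lia.
Qed.

Lemma Agr_slide A f p T T' : sh p -> closed A p -> QAp A p T -> H3 A p T ->
  size lam + head 0 lam < p.1 + p.2 + f -> Agr T T' ->
  Agr (slide_aux lam f p T) (slide_aux lam f p T').
Proof.
elim: f p T T' => [//|f IH] p T T' hp hcl hq h3 hf H.
case E: (cand p T) => [m|]; last first.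
  have E' : cand p T' = None.
    by have := cand_isSome p T T'; rewrite E; case: (cand p T').
  by rewrite !slide_step E E'.
have [hm hpm hmin] := cand_some E.
have hfm : size lam + head 0 lam < m.1 + m.2 + f by have := nbr_sum hpm; lia.
case: (ltnP (T m) k) => hmk.
  have E' := cand_small H E hmk.
  rewrite !slide_step E E'.
  have [em _] := H m hm.
  rewrite em //.
  case: (ltnP (T p) k) => hpk.
    have [ep _] := H p hp; rewrite ep //.
    case: ifP => hlt //.
    have [Am hclm hqm h3m] := pres hcl hq h3 hpm hmin hlt hm.
    by apply: IH => //; apply: Agr_swap.
  have [_ ep] := H p hp.
  have hlt : T m < T p by lia.
  have hlt' : T m < T' p by have := ep hpk; lia.
  rewrite hlt hlt'.
  have [Am hclm hqm h3m] := pres hcl hq h3 hpm hmin hlt hm.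
  by apply: IH => //; apply: Agr_swap.
case: (ltnP (T p) k) => hpk; last first.
  apply: (bigcase hp hcl hq h3 hf H hpk) => d hd hn.
  by have := hmin d hd hn; lia.
case E': (cand p T') => [m'|]; last first.
  by have := cand_isSome p T T'; rewrite E E'.
have [hm' hpm' _] := cand_some E'.
rewrite !slide_step E E'.
have [ep _] := H p hp; rewrite ep //.
have -> : T m < T p = false by apply/negbTE; rewrite -leqNgt; lia.
suff -> : T' m' < T p = false by [].
apply/negbTE; rewrite -leqNgt.
case: (ltnP (T' m') k) => h; last by lia.
case: (ltnP (T m') k) => h2.
  by have := hmin m' hm' hpm'; lia.
by have := (agr_big H hm'); rewrite h2 leqNgt h.
Qed.
End Slide.

Section Fold.
Variable lam : seq nat.
Hypothesis lam_sorted : sorted geq lam.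
Variables n k : nat.
Local Notation sh := (in_shape lam).
Implicit Types (T : nat * nat -> nat) (p m c d : nat * nat).

Definition Rng T := forall c, sh c -> 1 <= T c <= n.
Definition Inj T := forall c c', sh c -> sh c' -> T c = T c' -> c = c'.
Definition Surj T := forall l, 1 <= l <= n -> exists2 c, sh c & T c = l.

Definition tau p m c := if c == p then m else if c == m then p else c.

Lemma swap_tau T p m c : swap_entries T p m c = T (tau p m c).
Proof. by rewrite /swap_entries /tau; case: eqP => //; case: eqP. Qed.

Lemma tau_sh p m c : sh p -> sh m -> sh c -> sh (tau p m c).
Proof. by rewrite /tau => hp hm hc; case: eqP => //; case: eqP. Qed.

Lemma tauK p m c : tau p m (tau p m c) = c.
Proof.
rewrite /tau; case: (eqVneq c p) => [->|hcp].
  by rewrite eqxx; case: (eqVneq m p) => [->|h] //; rewrite eqxx.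
case: (eqVneq c m) => [->|hcm]; first by rewrite eqxx.
by rewrite (negbTE hcp) (negbTE hcm).
Qed.

Lemma swap_ok T p m : sh p -> sh m ->
  (Rng T -> Rng (swap_entries T p m)) /\ (Inj T -> Inj (swap_entries T p m)) /\
  (Surj T -> Surj (swap_entries T p m)).
Proof.
move=> hp hm; split; [|split].
- by move=> H c hc; rewrite swap_tau; apply: H; apply: tau_sh.
- move=> H c c' hc hc'; rewrite !swap_tau => e.
  by rewrite -(tauK p m c) -(tauK p m c') (H _ _ (tau_sh hp hm hc) (tau_sh hp hm hc') e).
- move=> H l hl; have [c hc e] := H l hl.
  by exists (tau p m c); [apply: tau_sh|rewrite swap_tau tauK].
Qed.

Lemma slide_ok f p T : sh p ->
  (Rng T -> Rng (slide_aux lam f p T)) /\ (Inj T -> Inj (slide_aux lam f p T)) /\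
  (Surj T -> Surj (slide_aux lam f p T)).
Proof.
elim: f p T => [//|f IH] p T hp; rewrite slide_step.
case E: (cand lam p T) => [m|] //; case: ifP => // _.
have [hm _ _] := cand_some lam_sorted E.
have [r1 [r2 r3]] := swap_ok T hp hm.
have [i1 [i2 i3]] := IH m (swap_entries T p m) hm.
by split; [move=> /r1/i1|split; [move=> /r2/i2|move=> /r3/i3]].
Qed.

Variables T T' : nat * nat -> nat.
Hypotheses (rT : Rng T) (iT : Inj T) (sT : Surj T) (rT' : Rng T') (iT' : Inj T').
Hypothesis aTT : Agr lam k T T'.
Local Notation zs := (cells_list lam).

Lemma fold_ok s j : s ++ drop (size zs).-1 zs = drop j zs ->
  let U := foldr (slide lam) T s in let U' := foldr (slide lam) T' s in
  [/\ QA lam k (fun c => c \in drop j zs) U, Agr lam k U U',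
      [/\ Rng U, Inj U & Surj U] & Rng U' /\ Inj U'].
Proof.
elim: s j => [|z s IH] j /=.
  move=> E; split => //.
  move=> c d hc _ hd hn _; have := zs_closed lam_sorted hc hd hn.
  by rewrite dropS_behead -E -dropS_behead drop_oversize //; lia.
move=> E.
have E2 : s ++ drop (size zs).-1 zs = drop j.+1 zs by rewrite dropS_behead -E.
have E3 : drop j zs = z :: drop j.+1 zs by rewrite -E E2.
have [IQ IA [r1 r2 r3] [r1' r2']] := IH _ E2.
set U0 := foldr (slide lam) T s in IQ IA r1 r2 r3 *.
set U0' := foldr (slide lam) T' s in IA r1' r2' *.
have hz : sh z by apply: (zs_shape (c := z)); apply: (mem_drop (n0 := j)); rewrite E3 mem_head.
set A := fun c => c \in drop j.+1 zs.
have hcl : closed lam A z.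
  move=> c d hc hd hn; rewrite /A; apply: (zs_closed lam_sorted _ hd hn).
  by rewrite E3 inE; case: hc => [h|->]; rewrite ?eqxx //; move: h; rewrite /A => ->; rewrite orbT.
have hqp : QAp lam k A z U0 by move=> c d hA _; apply: IQ.
have zA : z \notin drop j.+1 zs.
  by have := drop_uniq j (zs_uniq lam_sorted); rewrite E3 /= => /andP[].
have h3 : H3 lam k A z U0.
  by move=> c hA _ hc hn; have := hcl c z (or_introl hA) hz hn; rewrite /A (negbTE zA).
have hf : size lam + head 0 lam < z.1 + z.2 + (size lam + head 0 lam).
  by case/and3P: hz; lia.
have [Q _ _] := QA_slide lam_sorted hz hcl hqp h3 hf.
have Ag := Agr_slide lam_sorted hz hcl hqp h3 hf IA.
have [o1 [o2 o3]] := slide_ok (size lam + head 0 lam) U0 hz.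
have [o1' [o2' _]] := slide_ok (size lam + head 0 lam) U0' hz.
split => //.
- move=> c d hc; apply: Q; move: hc; rewrite E3 inE.
  by case/orP=> [->|h]; rewrite ?orbT // /A h.
- by split; [apply: o1|apply: o2|apply: o3].
- by split; [apply: o1'|apply: o2'].
Qed.
End Fold.
Unset Implicit Arguments.

Theorem lemma1 (k n : nat) (lam : seq nat) (pi : nat -> nat)
    (T : nat * nat -> nat) :
  k <= n ->
  is_partition n lam ->
  is_perm n pi ->
  (forall l, 1 <= l < k -> pi l = l) ->
  is_tabloid lam n T ->
  forall x, in_shape lam x ->
  exists pix : nat -> nat,
    is_perm n pix /\
    (forall c, in_shape lam c ->
       nps_inter lam (pi \o T) x c = pix (nps_inter lam T x c)) /\
    (forall l, 1 <= l < k -> pix l = l).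
Proof.
move=> hkn /and3P[ls _ _] [hpr hpi] hfix [hr [hi hs]] x hx.
set T' := pi \o T.
have rT : Rng lam n T by [].
have iT : Inj lam T by [].
have sT : Surj lam n T by [].
have rT' : Rng lam n T' by move=> c hc; apply: hpr; apply: hr.
have iT' : Inj lam T'.
  by move=> c c' hc hc' e; apply: hi => //; apply: hpi => //; apply: hr.
have aTT : Agr lam k T T'.
  move=> c hc; have := hr c hc => hrc; split => h.
    by rewrite /T' /=; apply: hfix; lia.
  rewrite /T' /=; case: (ltnP (pi (T c)) k) => // h2.
  have h3 := hpr _ hrc.
  have e : pi (pi (T c)) = pi (T c) by apply: hfix; lia.
  by have := hpi _ _ h3 hrc e; lia.
set zs := cells_list lam.
have xz : x \in zs := shape_zs ls hx.
set i := index x zs.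
have hi' : i < size zs by rewrite index_mem.
set s := take ((size zs).-1 - i) (drop i zs).
have Es : s ++ drop (size zs).-1 zs = drop i zs.
  rewrite /s -{2}(cat_take_drop ((size zs).-1 - i) (drop i zs)) drop_drop.
  by congr (_ ++ drop _ _); lia.
have [_ A [r1 r2 r3] [r1' r2']] := fold_ok ls rT iT sT rT' iT' aTT Es.
have -> : nps_inter lam T' x = foldr (slide lam) T' s by [].
have -> : nps_inter lam T x = foldr (slide lam) T s by [].
set U := foldr (slide lam) T s in A r1 r2 r3 *.
set U' := foldr (slide lam) T' s in A r1' r2' *.
pose inv l := nth (0, 0) zs (index l (map U zs)).
have inv_spec : forall l, 1 <= l <= n -> in_shape lam (inv l) /\ U (inv l) = l.
  move=> l hl; have [c hc e] := r3 l hl.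
  have cz : c \in zs := shape_zs ls hc.
  have lm : l \in map U zs by rewrite -e map_f.
  have hil : index l (map U zs) < size zs by rewrite -(size_map U) index_mem.
  split; first by apply: (zs_shape (lam := lam)); apply: mem_nth.
  by rewrite /inv -(nth_map (0, 0) 0) // nth_index.
exists (fun l => U' (inv l)); split; [split|split].
- by move=> l hl; apply: r1'; have [] := inv_spec l hl.
- move=> l l' hl hl' e.
  have [s1 e1] := inv_spec l hl; have [s2 e2] := inv_spec l' hl'.
  by rewrite -e1 -e2 (r2' _ _ s1 s2 e).
- move=> c hc; have hl := r1 c hc; have [s1 e1] := inv_spec _ hl.
  by rewrite (r2 _ _ s1 hc e1).
- move=> l hl; have hl' : 1 <= l <= n by lia.
  have [s1 e1] := inv_spec l hl'.
  have [e _] := A _ s1; rewrite e e1 //; lia.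
Qed.
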